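(* Let $(\alpha,\beta)\in\mathbb{R}^2\setminus\{(0,0)\}$ and let $\overline y$ be the solution of $\ddot y+3y+\frac32y^3=0$, $y(0)=\alpha$, $\dot y(0)=\beta$, with energy $E_1=\frac{\beta^2}{2}+\frac32\alpha^2+\frac38\alpha^4$. Then $\overline y$ is torsionally stable, i.e. the trivial solution of the Hill equation $\ddot\xi+\big(7+\frac{27}{2}\overline y(t)^2\big)\xi=0$ is stable in the Lyapunov sense, provided that $\|\overline y\|_\infty\le\sqrt{10/21}$ or, equivalently, provided that $E_1\le\frac{235}{294}$.
   Context: $\overline y$ is the first vertical mode of the one-mode system $\ddot y_1+3y_1+\frac32y_1^3+\frac92y_1z_1^2=0$, $\ddot z_1+7z_1+\frac92z_1^3+\frac{27}{2}z_1y_1^2=0$ (the solution with $z_1\equiv0$), and the Hill equation is the linearization of the $z_1$-equation around $(\overline y,0)$. Stability of the trivial solution means that solutions with small $|\xi(0)|,|\dot\xi(0)|$ remain small for all $t\ge0$. *)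

(* Defs.v *)
From Stdlib Require Import Reals.
From Coquelicot Require Import Coquelicot.
Open Scope R_scope.

Definition energy1 (alpha beta : R) : R :=
  beta ^ 2 / 2 + 3 / 2 * alpha ^ 2 + 3 / 8 * alpha ^ 4.

Definition hill_trivial_stable (q : R -> R) : Prop :=
  forall eps : R, 0 < eps ->
  exists delta : R, 0 < delta /\
  forall xi dxi : R -> R,
    (forall t, is_derive xi t (dxi t)) ->
    (forall t, is_derive dxi t (- (q t * xi t))) ->
    Rabs (xi 0) < delta -> Rabs (dxi 0) < delta ->
    forall t, 0 <= t -> Rabs (xi t) < eps /\ Rabs (dxi t) < eps.

(* Main.v *)
Require Import Defs.
From Stdlib Require Import Reals Lra Lia Psatz Classical.
From Coquelicot Require Import Coquelicot.
Open Scope R_scope.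

Lemma D_eq (f : R -> R) (x l l' : R) : is_derive f x l -> l = l' -> is_derive f x l'.
Proof. intros H ->; exact H. Qed.

Lemma D_plus (f g : R -> R) (x a b : R) : is_derive f x a -> is_derive g x b ->
  is_derive (fun t => f t + g t) x (a + b).
Proof. intros. apply (is_derive_plus f g x a b); auto. Qed.

Lemma D_minus (f g : R -> R) (x a b : R) : is_derive f x a -> is_derive g x b ->
  is_derive (fun t => f t - g t) x (a - b).
Proof. intros. apply (is_derive_minus f g x a b); auto. Qed.

Lemma D_mult (f g : R -> R) (x a b : R) : is_derive f x a -> is_derive g x b ->
  is_derive (fun t => f t * g t) x (a * g x + f x * b).
Proof. intros. apply (is_derive_mult f g x a b); auto.
 intros; apply Rmult_comm. Qed.

Lemma D_opp (f : R -> R) (x a : R) : is_derive f x a -> is_derive (fun t => - f t) x (- a).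
Proof. intros. apply (is_derive_opp f x a); auto. Qed.

Lemma D_scal (f : R -> R) (x k a : R) : is_derive f x a -> is_derive (fun t => k * f t) x (k * a).
Proof. apply is_derive_scal. Qed.

Lemma D_const (c x : R) : is_derive (fun _ => c) x 0.
Proof. apply (is_derive_const c x). Qed.

Lemma D_id (x : R) : is_derive (fun t => t) x 1.
Proof. apply (is_derive_id x). Qed.

Lemma D_pow (f : R -> R) (x a : R) n : is_derive f x a ->
  is_derive (fun t => f t ^ n) x (INR n * a * f x ^ Init.Nat.pred n).
Proof. apply is_derive_pow. Qed.

Lemma D_comp (f g : R -> R) (x df dg : R) : is_derive f (g x) df -> is_derive g x dg ->
  is_derive (fun t => f (g t)) x (dg * df).
Proof. intros. apply (is_derive_comp f g x df dg); auto. Qed.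

Lemma D_shift (f df : R -> R) (c x : R) : (forall t, is_derive f t (df t)) ->
  is_derive (fun t => f (t + c)) x (df (x + c)).
Proof. intros H. assert (Hi : is_derive (fun t => t + c) x 1).
 { eapply D_eq. apply D_plus. apply D_id. apply D_const. ring. }
 eapply D_eq. apply (D_comp f (fun t => t + c)). apply H. apply Hi. ring. Qed.

Lemma D_refl (f df : R -> R) (c x : R) : (forall t, is_derive f t (df t)) ->
  is_derive (fun t => f (c - t)) x (- df (c - x)).
Proof. intros H. assert (Hi : is_derive (fun t => c - t) x (-1)).
 { eapply D_eq. apply D_minus. apply D_const. apply D_id. ring. }
 eapply D_eq. apply (D_comp f (fun t => c - t)). apply H. apply Hi. ring. Qed.

Lemma loc_pos (f : R -> R) (x d : R) : is_derive f x d -> 0 < d ->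
  exists del, 0 < del /\ forall h, 0 < h < del -> f x < f (x + h) /\ f (x - h) < f x.
Proof.
 intros H Hd. apply is_derive_Reals in H.
 destruct (H (d/2) ltac:(lra)) as [del Hdel].
 exists del. split. apply cond_pos. intros h Hh.
 assert (A1 := Hdel h ltac:(lra) ltac:(rewrite Rabs_pos_eq; lra)).
 assert (A2 := Hdel (-h) ltac:(lra) ltac:(rewrite Rabs_left; lra)).
 replace (x + - h) with (x - h) in A2 by ring.
 apply Rabs_def2 in A1. apply Rabs_def2 in A2. destruct A1 as [A1 B1], A2 as [A2 B2].
 split.
 - assert (0 < (f (x+h) - f x)/h) by lra.
   assert (0 < f (x + h) - f x). { 
     replace (f (x+h) - f x) with ((f (x + h) - f x)/h * h) by (field; lra).
     apply Rmult_lt_0_compat; lra. } lra.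
 - assert (0 < (f (x - h) - f x)/(-h)) by lra.
   assert (0 < f x - f (x - h)). {
     replace (f x - f (x-h)) with ((f (x - h) - f x)/(-h) * h) by (field; lra).
     apply Rmult_lt_0_compat; lra. } lra.
Qed.

Lemma loc_neg (f : R -> R) (x d : R) : is_derive f x d -> d < 0 ->
  exists del, 0 < del /\ forall h, 0 < h < del -> f (x + h) < f x /\ f x < f (x - h).
Proof.
 intros H Hd. destruct (loc_pos (fun t => - f t) x (-d) (D_opp _ _ _ H) ltac:(lra))
  as [del [Hp Hh]]. exists del; split; auto. intros h Hh'. specialize (Hh h Hh'). lra.
Qed.

Lemma deriv_cont (f : R -> R) (x d : R) : is_derive f x d ->
  forall e, 0 < e -> exists del, 0 < del /\ forall z, Rabs (z - x) < del -> Rabs (f z - f x) < e.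
Proof.
 intros H e He. apply is_derive_Reals in H.
 destruct (H 1 ltac:(lra)) as [del Hdel].
 set (r := Rmin del (e / (Rabs d + 2))).
 assert (Hr : 0 < r). { unfold r. apply Rmin_pos. apply cond_pos.
   apply Rdiv_lt_0_compat; auto. pose proof (Rabs_pos d); lra. }
 exists r. split; auto. intros z Hz.
 destruct (Req_dec z x) as [->|Hne]. rewrite Rminus_diag, Rabs_R0; auto.
 assert (Hz1 : Rabs (z - x) < del). { eapply Rlt_le_trans. exact Hz. unfold r; apply Rmin_l. }
 assert (Hz2 : Rabs (z - x) < e / (Rabs d + 2)). { eapply Rlt_le_trans. exact Hz. unfold r; apply Rmin_r. }
 specialize (Hdel (z - x) ltac:(lra) Hz1). replace (x + (z - x)) with z in Hdel by ring.
 assert (Hq : Rabs (f z - f x) <= (Rabs d + 1) * Rabs (z - x)).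
 { replace (f z - f x) with (((f z - f x)/(z - x) - d) * (z - x) + d * (z - x)) by (field; lra).
   eapply Rle_trans. apply Rabs_triang. rewrite !Rabs_mult.
   pose proof (Rabs_pos (z - x)). nra. }
 pose proof (Rabs_pos d).
 assert ((Rabs d + 1) * Rabs (z - x) < e).
 { apply Rlt_le_trans with ((Rabs d + 2) * (e / (Rabs d + 2))).
   pose proof (Rabs_pos (z-x)). assert (0 < Rabs (z - x)) by (apply Rabs_pos_lt; lra). nra.
   right; field; lra. }
 lra.
Qed.

Lemma deriv_continuity (f df : R -> R) : (forall t, is_derive f t (df t)) -> continuity f.
Proof.
 intros H x. apply derivable_continuous_pt. exists (df x). apply is_derive_Reals, H.
Qed.

Lemma mono_le (f df : R -> R) (a b : R) : a <= b -> (forall x, a <= x <= b -> is_derive f x (df x)) ->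
  (forall x, a < x < b -> df x <= 0) -> f b <= f a.
Proof.
 intros Hab H Hd. destruct (Req_dec a b) as [->|Hne]. lra.
 destruct (MVT_cor2 f df a b ltac:(lra)) as [c [Hc Hc2]].
 intros c Hc. apply is_derive_Reals, H; lra.
 specialize (Hd c Hc2). nra.
Qed.

Lemma mono_ge (f df : R -> R) (a b : R) : a <= b -> (forall x, a <= x <= b -> is_derive f x (df x)) ->
  (forall x, a < x < b -> 0 <= df x) -> f a <= f b.
Proof.
 intros Hab H Hd. pose proof (mono_le (fun t => - f t) (fun t => - df t) a b Hab).
 assert (- f b <= - f a). apply H0. intros; apply D_opp; auto. intros; specialize (Hd x H1); lra. lra.
Qed.

Lemma const_deriv0 (f df : R -> R) (a b : R) : (forall x, is_derive f x (df x)) -> (forall x, df x = 0) -> f a = f b.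
Proof.
 intros H H0. destruct (Rle_dec a b).
 - apply Rle_antisym. apply mono_ge with df; auto; intros; rewrite H0; lra.
   apply mono_le with df; auto; intros; rewrite H0; lra.
 - apply Rle_antisym. apply mono_le with df; auto; try lra; intros; rewrite H0; lra.
   apply mono_ge with df; auto; try lra; intros; rewrite H0; lra.
Qed.

Lemma D_sq (f : R -> R) x a : is_derive f x a -> is_derive (fun t => f t ^ 2) x (2 * f x * a).
Proof. intros H. eapply D_eq. apply D_pow; eauto. simpl. ring. Qed.
Lemma D_p4 (f : R -> R) x a : is_derive f x a -> is_derive (fun t => f t ^ 4) x (4 * f x ^ 3 * a).
Proof. intros H. eapply D_eq. apply D_pow; eauto. simpl. ring. Qed.

Definition ctn (f : R -> R) := forall x e, 0 < e -> exists del, 0 < del /\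
  forall z, Rabs (z - x) < del -> Rabs (f z - f x) < e.

Lemma ctn_of_deriv (f df : R -> R) : (forall t, is_derive f t (df t)) -> ctn f.
Proof. intros H x e He. eapply deriv_cont; eauto. Qed.

Lemma first_zero (f : R -> R) a b : ctn f -> a < b -> 0 < f a -> f b <= 0 ->
  exists c, a < c <= b /\ f c = 0 /\ forall s, a <= s < c -> 0 < f s.
Proof.
 intros Hc Hab Ha Hb.
 set (E := fun x => a <= x <= b /\ forall s, a <= s <= x -> 0 < f s).
 assert (HEb : bound E). { exists b. intros x [Hx _]. lra. }
 assert (HEa : exists x, E x). { exists a. split. lra. intros s Hs. replace s with a by lra; auto. }
 destruct (completeness E HEb HEa) as [c [Hub Hlub]].
 assert (Hac : a <= c). { apply Hub. destruct HEa as [x Hx]. split. lra. intros s Hs; replace s with a by lra; auto. }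
 assert (Hcb : c <= b). { apply Hlub. intros x [Hx _]; lra. }
 assert (P1 : forall s, a <= s < c -> 0 < f s).
 { intros s Hs. destruct (classic (exists x, E x /\ s < x)) as [[x [[Hx1 Hx2] Hx3]]|Hn].
   apply Hx2; lra.
   exfalso. assert (c <= s). { apply Hlub. intros x Hx. destruct (Rle_dec x s); auto.
     exfalso; apply Hn; exists x; split; auto; lra. } lra. }
 assert (Hfc : f c = 0).
 { destruct (Rtotal_order (f c) 0) as [Hlt|[Heq|Hgt]]; auto; exfalso.
   - destruct (Hc c (- f c) ltac:(lra)) as [d [Hd Hd2]].
     assert (a < c). { destruct (Req_dec a c) as [<-|]; [lra|lra]. }
     set (s := Rmax a (c - d/2)).
     assert (Hs1 : a <= s) by (unfold s; apply Rmax_l).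
     assert (Hs2 : s < c). { unfold s; apply Rmax_lub_lt; lra. }
     assert (Hs3 : c - d/2 <= s) by (unfold s; apply Rmax_r).
     specialize (P1 s ltac:(lra)). specialize (Hd2 s ltac:(rewrite Rabs_left; lra)).
     apply Rabs_def2 in Hd2. lra.
   - destruct (Hc c (f c) Hgt) as [d [Hd Hd2]].
     assert (c < b). { destruct (Req_dec c b) as [->|]; [lra|lra]. }
     set (x := Rmin b (c + d/2)).
     assert (Hx1 : x <= b) by (unfold x; apply Rmin_l).
     assert (Hx2 : c < x). { unfold x; apply Rmin_glb_lt; lra. }
     assert (Hx3 : x <= c + d/2) by (unfold x; apply Rmin_r).
     assert (E x). { split. lra. intros s Hs. destruct (Rlt_dec s c). apply P1; lra.
       specialize (Hd2 s ltac:(rewrite Rabs_pos_eq; lra)). apply Rabs_def2 in Hd2. lra. }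
     specialize (Hub x H0). lra. }
 exists c. split; [|split]; auto. split; auto. destruct (Req_dec a c) as [<-|]; lra.
Qed.

Lemma abs_le x y : Rabs x <= y -> - y <= x <= y.
Proof. unfold Rabs; destruct (Rcase_abs x); lra. Qed.

Lemma gron_fwd (f df : R -> R) K s t : (forall x, is_derive f x (df x)) ->
  (forall x, df x <= K * f x) -> s <= t -> f t * exp (- K * t) <= f s * exp (- K * s).
Proof.
 intros H Hd Hst. apply (mono_le (fun x => f x * exp (- K * x)) (fun x => (df x - K * f x) * exp (- K * x))); auto.
 - intros x _. eapply D_eq. apply D_mult. apply H.
   apply (D_comp exp (fun x => - K * x)). apply is_derive_exp.
   eapply D_eq. apply D_scal. apply D_id. reflexivity. cbv beta; ring.
 - intros x _. specialize (Hd x). pose proof (exp_pos (- K * x)). nra.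
Qed.

Lemma gron_bwd (f df : R -> R) K s t : (forall x, is_derive f x (df x)) ->
  (forall x, - K * f x <= df x) -> s <= t -> f s * exp (K * s) <= f t * exp (K * t).
Proof.
 intros H Hd Hst. apply (mono_ge (fun x => f x * exp (K * x)) (fun x => (df x + K * f x) * exp (K * x))); auto.
 - intros x _. eapply D_eq. apply D_mult. apply H.
   apply (D_comp exp (fun x => K * x)). apply is_derive_exp.
   eapply D_eq. apply D_scal. apply D_id. reflexivity. cbv beta; ring.
 - intros x _. specialize (Hd x). pose proof (exp_pos (K * x)). nra.
Qed.

Lemma gron_zero (f df : R -> R) K t0 : (forall x, is_derive f x (df x)) ->
  (forall x, 0 <= f x) -> (forall x, Rabs (df x) <= K * f x) -> f t0 = 0 -> forall t, f t = 0.
Proof.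
 intros H Hp Hd H0 t. destruct (Rle_dec t0 t).
 - pose proof (gron_fwd f df K t0 t H ltac:(intros x; specialize (Hd x); apply abs_le in Hd; lra) r).
   rewrite H0 in H1. pose proof (exp_pos (- K * t)). specialize (Hp t). nra.
 - pose proof (gron_bwd f df K t t0 H ltac:(intros x; specialize (Hd x); apply abs_le in Hd; lra) ltac:(lra)).
   rewrite H0 in H1. pose proof (exp_pos (K * t)). specialize (Hp t). nra.
Qed.

Lemma deriv_end_nonpos (f : R -> R) a b d : a < b -> is_derive f b d -> f b = 0 ->
  (forall s, a < s < b -> 0 < f s) -> d <= 0.
Proof.
 intros Hab H Hb Hp. destruct (Rle_dec d 0); auto. exfalso.
 destruct (loc_pos f b d H ltac:(lra)) as [del [Hd Hh]].
 set (h := Rmin (del/2) ((b - a)/2)).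
 assert (0 < h). { unfold h; apply Rmin_pos; lra. }
 assert (h < del). { unfold h. eapply Rle_lt_trans. apply Rmin_l. lra. }
 assert (h <= (b-a)/2) by (unfold h; apply Rmin_r).
 destruct (Hh h ltac:(lra)) as [_ Hq]. specialize (Hp (b - h) ltac:(lra)). lra.
Qed.

Definition hill (Q z dz : R -> R) :=
  (forall t, is_derive z t (dz t)) /\ (forall t, is_derive dz t (- (Q t * z t))).

Lemma hill_opp Q z dz : hill Q z dz -> hill Q (fun t => - z t) (fun t => - dz t).
Proof. intros [H1 H2]; split; intros t. apply D_opp; auto.
 eapply D_eq. apply D_opp. apply H2. ring. Qed.

Definition Wr (z dz : R -> R) m a t :=
  dz t * sin (m * (t - a)) - z t * (m * cos (m * (t - a))).

Lemma D_sinlin m a x : is_derive (fun t => sin (m * (t - a))) x (m * cos (m * (x - a))).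
Proof.
 assert (Hi : is_derive (fun t => m * (t - a)) x m).
 { eapply D_eq. apply D_scal. apply D_minus. apply D_id. apply D_const. ring. }
 eapply D_eq. apply (D_comp sin (fun t => m * (t - a))). apply is_derive_sin. apply Hi. reflexivity.
Qed.

Lemma D_coslin m a x : is_derive (fun t => cos (m * (t - a))) x (- m * sin (m * (x - a))).
Proof.
 assert (Hi : is_derive (fun t => m * (t - a)) x m).
 { eapply D_eq. apply D_scal. apply D_minus. apply D_id. apply D_const. ring. }
 eapply D_eq. apply (D_comp cos (fun t => m * (t - a))). apply is_derive_cos. apply Hi. ring.
Qed.

Lemma Wr_deriv Q z dz m a : hill Q z dz -> forall t,
  is_derive (Wr z dz m a) t ((m * m - Q t) * z t * sin (m * (t - a))).
Proof.
 intros [H1 H2] t. unfold Wr. eapply D_eq. apply D_minus. apply D_mult. apply H2. apply D_sinlin.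
 apply D_mult. apply H1. apply D_scal. apply D_coslin. cbv beta; ring.
Qed.

Lemma sturm_L0 Q z dz m s : 0 < m -> hill Q z dz ->
  (forall t, s <= t <= s + PI / m -> m * m <= Q t) ->
  (forall t, s <= t <= s + PI / m -> 0 < z t) -> False.
Proof.
 intros Hm Hh HQ Hz. pose proof PI_RGT_0 as Hpi.
 assert (Hpm : 0 < PI / m) by (apply Rdiv_lt_0_compat; lra).
 assert (Hle : Wr z dz m s (s + PI/m) <= Wr z dz m s s).
 { apply (mono_le _ _ s (s + PI/m) ltac:(lra) (fun t _ => Wr_deriv Q z dz m s Hh t)).
   intros x Hx. assert (0 <= sin (m * (x - s))). { apply sin_ge_0.
     apply Rmult_le_pos; lra. replace PI with (m * (PI / m)) by (field; lra).
     apply Rmult_le_compat_l; lra. }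
   specialize (HQ x ltac:(lra)). specialize (Hz x ltac:(lra)).
   assert (0 <= (Q x - m * m) * z x * sin (m * (x - s))).
   { apply Rmult_le_pos; auto. apply Rmult_le_pos; lra. } nra. }
 unfold Wr in Hle. replace (s + PI / m - s) with (PI / m) in Hle by ring.
 replace (m * (PI / m)) with PI in Hle by (field; lra). replace (s - s) with 0 in Hle by ring.
 rewrite Rmult_0_r, sin_0, cos_0, sin_PI, cos_PI in Hle.
 specialize (Hz s ltac:(lra)) as Hz1. specialize (Hz (s + PI/m) ltac:(lra)) as Hz2. nra.
Qed.

Lemma sturm_L Q z dz m a : 0 < m -> hill Q z dz -> z a = 0 -> z (a + PI / m) = 0 ->
  (forall t, a < t < a + PI / m -> m * m < Q t) ->
  (forall t, a < t < a + PI / m -> 0 < z t) -> False.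
Proof.
 intros Hm Hh Za Zb HQ Hz. pose proof PI_RGT_0 as Hpi.
 assert (Hpm : 0 < PI / m) by (apply Rdiv_lt_0_compat; lra).
 set (b := a + PI / m).
 assert (Hneg : forall x, a < x < b -> (m * m - Q x) * z x * sin (m * (x - a)) < 0).
 { intros x Hx. assert (0 < sin (m * (x - a))). { apply sin_gt_0.
     apply Rmult_lt_0_compat; lra. replace PI with (m * (PI / m)) by (field; lra).
     apply Rmult_lt_compat_l; unfold b in Hx; lra. }
   specialize (HQ x Hx). specialize (Hz x Hx).
   assert (0 < (Q x - m * m) * z x * sin (m * (x - a))).
   { apply Rmult_lt_0_compat; auto. apply Rmult_lt_0_compat; lra. } nra. }
 set (c := a + PI / m / 2).
 assert (Hc : a < c < b) by (unfold c, b; lra).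
 destruct (loc_neg _ _ _ (Wr_deriv Q z dz m a Hh c) (Hneg c Hc)) as [del [Hd Hdd]].
 set (h := Rmin (del / 2) ((b - c) / 2)).
 assert (0 < h) by (unfold h; apply Rmin_pos; lra).
 assert (h < del) by (unfold h; eapply Rle_lt_trans; [apply Rmin_l|lra]).
 assert (h <= (b - c)/2) by (unfold h; apply Rmin_r).
 destruct (Hdd h ltac:(lra)) as [Hd1 _].
 assert (W1 : Wr z dz m a c <= Wr z dz m a a).
 { apply (mono_le _ _ a c ltac:(lra) (fun t _ => Wr_deriv Q z dz m a Hh t)).
   intros x Hx; specialize (Hneg x ltac:(lra)); lra. }
 assert (W2 : Wr z dz m a b <= Wr z dz m a (c + h)).
 { apply (mono_le _ _ (c + h) b ltac:(lra) (fun t _ => Wr_deriv Q z dz m a Hh t)).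
   intros x Hx; specialize (Hneg x ltac:(lra)); lra. }
 assert (Wa : Wr z dz m a a = 0). { unfold Wr. rewrite Za. replace (a - a) with 0 by ring.
   rewrite Rmult_0_r, sin_0. ring. }
 assert (Wb : Wr z dz m a b = 0). { unfold Wr, b. rewrite Zb.
   replace (a + PI / m - a) with (PI / m) by ring.
   replace (m * (PI / m)) with PI by (field; lra). rewrite sin_PI. ring. }
 lra.
Qed.

Lemma sturm_U Q z dz M a b : 0 < M -> hill Q z dz -> a < b -> z a = 0 -> z b = 0 ->
  (forall t, a < t < b -> 0 < z t) ->
  (forall t, a < t < b -> Q t <= M * M) ->
  (exists s, a < s < b /\ Q s < M * M) -> PI / M < b - a.
Proof.
 intros HM Hh Hab Za Zb Hz HQ [s [Hs HQs]]. pose proof PI_RGT_0 as Hpi.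
 destruct (Rlt_dec (PI / M) (b - a)) as [|Hn]; auto. exfalso.
 assert (Hsin : forall x, a < x < b -> 0 < sin (M * (x - a))).
 { intros x Hx. apply sin_gt_0. apply Rmult_lt_0_compat; lra.
   replace PI with (M * (PI / M)) by (field; lra). apply Rmult_lt_compat_l; lra. }
 assert (Hsb : 0 <= sin (M * (b - a))).
 { apply sin_ge_0. apply Rmult_le_pos; lra.
   replace PI with (M * (PI / M)) by (field; lra). apply Rmult_le_compat_l; lra. }
 assert (Hpos : forall x, a < x < b -> 0 <= (M * M - Q x) * z x * sin (M * (x - a))).
 { intros x Hx. specialize (HQ x Hx). specialize (Hz x Hx). specialize (Hsin x Hx).
   apply Rmult_le_pos; [apply Rmult_le_pos|]; lra. }
 assert (Hspos : 0 < (M * M - Q s) * z s * sin (M * (s - a))).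
 { specialize (Hz s Hs). specialize (Hsin s Hs).
   apply Rmult_lt_0_compat; [apply Rmult_lt_0_compat|]; lra. }
 destruct (loc_pos _ _ _ (Wr_deriv Q z dz M a Hh s) Hspos) as [del [Hd Hdd]].
 set (h := Rmin (del / 2) ((b - s) / 2)).
 assert (0 < h) by (unfold h; apply Rmin_pos; lra).
 assert (h < del) by (unfold h; eapply Rle_lt_trans; [apply Rmin_l|lra]).
 assert (h <= (b - s)/2) by (unfold h; apply Rmin_r).
 destruct (Hdd h ltac:(lra)) as [Hd1 _].
 assert (W1 : Wr z dz M a a <= Wr z dz M a s).
 { apply (mono_ge _ _ a s ltac:(lra) (fun t _ => Wr_deriv Q z dz M a Hh t)).
   intros x Hx; apply Hpos; lra. }
 assert (W2 : Wr z dz M a (s + h) <= Wr z dz M a b).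
 { apply (mono_ge _ _ (s + h) b ltac:(lra) (fun t _ => Wr_deriv Q z dz M a Hh t)).
   intros x Hx; apply Hpos; lra. }
 assert (Wa : Wr z dz M a a = 0). { unfold Wr. rewrite Za. replace (a - a) with 0 by ring.
   rewrite Rmult_0_r, sin_0. ring. }
 assert (Hdb : dz b <= 0).
 { destruct Hh as [Hh1 _]. apply (deriv_end_nonpos z a b (dz b) Hab (Hh1 b) Zb Hz). }
 assert (Wb : Wr z dz M a b <= 0). { unfold Wr. rewrite Zb. nra. }
 lra.
Qed.

Lemma Rabs_le2 x y : - y <= x <= y -> Rabs x <= y.
Proof. intros; apply Rabs_le; lra. Qed.

Lemma deriv_zero_fun (z : R -> R) t d : (forall t, z t = 0) -> is_derive z t d -> d = 0.
Proof.
 intros H0 H. apply is_derive_unique in H. rewrite <- H.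
 apply is_derive_unique. apply is_derive_ext with (fun _ => 0). intros; rewrite H0; auto.
 apply D_const.
Qed.

Lemma zero_exists Q z dz m s : 0 < m -> hill Q z dz -> (forall t, m * m <= Q t) ->
  exists t0, s <= t0 <= s + PI / m /\ z t0 = 0.
Proof.
 intros Hm Hh HQ. pose proof PI_RGT_0. assert (0 < PI / m) by (apply Rdiv_lt_0_compat; lra).
 destruct (classic (exists t0, s <= t0 <= s + PI / m /\ z t0 = 0)) as [|Hn]; auto.
 exfalso. destruct Hh as [H1 H2].
 assert (Hc : continuity z) by (apply (deriv_continuity z dz H1)).
 assert (Hc' : continuity (fun t => - z t)) by (apply continuity_opp; auto).
 destruct (Rtotal_order (z s) 0) as [Hlt|[Heq|Hgt]].
 - apply (sturm_L0 Q (fun t => - z t) (fun t => - dz t) m s Hm (hill_opp _ _ _ (conj H1 H2))).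
   intros; auto. intros t Ht.
   destruct (Rlt_dec (z t) 0). lra. exfalso.
   destruct (IVT_cor z s t Hc ltac:(lra) ltac:(nra)) as [r [Hr1 Hr2]]. apply Hn; exists r; split; auto; lra.
 - apply Hn; exists s; split; auto; lra.
 - apply (sturm_L0 Q z dz m s Hm (conj H1 H2)). intros; auto. intros t Ht.
   destruct (Rlt_dec 0 (z t)). lra. exfalso.
   destruct (IVT_cor z s t Hc ltac:(lra) ltac:(nra)) as [r [Hr1 Hr2]]. apply Hn; exists r; split; auto; lra.
Qed.

Section Hill.
Variable q : R -> R.
Variable T : R.
Hypothesis HT : 0 < T.
Hypothesis Hper : forall t, q (t + T) = q t.
Hypothesis Hlo : forall t, (PI / T) * (PI / T) < q t.
Hypothesis Hhi : forall t, q t <= (2 * PI / T) * (2 * PI / T).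
Hypothesis Hstrict : forall a b, a < b -> exists s, a < s < b /\ q s < (2 * PI / T) * (2 * PI / T).

Definition Kq := 1 + (2 * PI / T) * (2 * PI / T).

Lemma q_pos t : 0 < q t.
Proof. specialize (Hlo t). assert (0 <= (PI/T)*(PI/T)) by nra. lra. Qed.

Lemma en_deriv z dz : hill q z dz -> forall t,
  is_derive (fun t => z t ^ 2 + dz t ^ 2) t (2 * (1 - q t) * z t * dz t).
Proof.
 intros [H1 H2] t. eapply D_eq. apply D_plus; apply D_pow; auto. simpl; ring.
Qed.

Lemma en_bound z dz t : Rabs (2 * (1 - q t) * z t * dz t) <= Kq * (z t ^ 2 + dz t ^ 2).
Proof.
 pose proof (q_pos t). pose proof (Hhi t). unfold Kq. apply Rabs_le2.
 set (K := 1 + 2 * PI / T * (2 * PI / T)). set (c := 1 - q t). set (u := z t). set (v := dz t).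
 assert (Hc1 : 0 <= K - c) by (unfold K, c; lra). assert (Hc2 : 0 <= K + c) by (unfold K, c; lra).
 assert (0 <= (K - c) * (u + v)^2) by (apply Rmult_le_pos; auto; apply pow2_ge_0).
 assert (0 <= (K + c) * (u - v)^2) by (apply Rmult_le_pos; auto; apply pow2_ge_0).
 assert (0 <= (K + c) * (u + v)^2) by (apply Rmult_le_pos; auto; apply pow2_ge_0).
 assert (0 <= (K - c) * (u - v)^2) by (apply Rmult_le_pos; auto; apply pow2_ge_0).
 split; nra.
Qed.

Lemma hill_uniq z dz t0 : hill q z dz -> z t0 = 0 -> dz t0 = 0 -> forall t, z t = 0 /\ dz t = 0.
Proof.
 intros Hh Z0 D0 t.
 assert (Hf := gron_zero (fun t => z t ^ 2 + dz t ^ 2) (fun t => 2 * (1 - q t) * z t * dz t) Kq t0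
   (en_deriv z dz Hh) ltac:(intros; nra) (en_bound z dz) ltac:(cbv beta; rewrite Z0, D0; ring) t).
 simpl in Hf. split; nra.
Qed.

Lemma hill_growth z dz s t : hill q z dz -> s <= t ->
  z t ^ 2 + dz t ^ 2 <= (z s ^ 2 + dz s ^ 2) * exp (Kq * (t - s)).
Proof.
 intros Hh Hst.
 pose proof (gron_fwd (fun t => z t ^ 2 + dz t ^ 2) (fun t => 2 * (1 - q t) * z t * dz t) Kq s t
   (en_deriv z dz Hh) ltac:(intros x; pose proof (en_bound z dz x) as Hb; apply abs_le in Hb; lra) Hst) as H.
 simpl in H. replace (Kq * (t - s)) with (- Kq * s + - (- Kq * t)) by ring.
 rewrite exp_plus, exp_Ropp. pose proof (exp_pos (- Kq * t)).
 apply (Rmult_le_reg_r (exp (- Kq * t))); auto.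
 replace ((z s ^ 2 + dz s ^ 2) * (exp (- Kq * s) * / exp (- Kq * t)) * exp (- Kq * t))
   with ((z s * (z s * 1) + dz s * (dz s * 1)) * exp (- Kq * s)) by (field; lra).
 lra.
Qed.

Lemma hill_shift z dz : hill q z dz -> hill q (fun t => z (t + T)) (fun t => dz (t + T)).
Proof.
 intros [H1 H2]. split; intros t. apply D_shift; auto.
 eapply D_eq. apply (D_shift dz (fun t => - (q t * z t))); auto. rewrite Hper; auto.
Qed.

Lemma hill_lin a b z1 dz1 z2 dz2 : hill q z1 dz1 -> hill q z2 dz2 ->
  hill q (fun t => a * z1 t + b * z2 t) (fun t => a * dz1 t + b * dz2 t).
Proof.
 intros [H1 H2] [H3 H4]. split; intros t.
 apply D_plus; apply D_scal; auto.
 eapply D_eq. apply D_plus; apply D_scal; auto. ring.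
Qed.

Lemma eigen_pos z dz mu t0 : hill q z dz -> (forall t, z (t + T) = mu * z t) ->
  z t0 = 0 -> 0 < dz t0 -> False.
Proof.
 intros Hh Heig Z0 D0. pose proof PI_RGT_0 as Hpi.
 assert (HM : 0 < 2 * PI / T) by (apply Rdiv_lt_0_compat; lra).
 assert (Hm : 0 < PI / T) by (apply Rdiv_lt_0_compat; lra).
 assert (HPM : PI / (2 * PI / T) = T / 2) by (field; lra).
 assert (HPm : PI / (PI / T) = T) by (field; lra).
 destruct Hh as [H1 H2] eqn:Ehh.
 assert (Hc : ctn z) by (apply (ctn_of_deriv z dz H1)).
 assert (ZT : z (t0 + T) = 0) by (rewrite Heig, Z0; ring).
 destruct (loc_pos z t0 (dz t0) (H1 t0) D0) as [del [Hdel Hd]].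
 rewrite Z0 in Hd.
 set (h0 := Rmin (del / 2) (T / 2)).
 assert (0 < h0) by (unfold h0; apply Rmin_pos; lra).
 assert (h0 < del) by (unfold h0; eapply Rle_lt_trans; [apply Rmin_l|lra]).
 assert (h0 <= T / 2) by (unfold h0; apply Rmin_r).
 set (p := t0 + h0).
 assert (Zp : 0 < z p) by (apply (Hd h0); lra).
 assert (Hnear : forall s, t0 < s <= p -> 0 < z s).
 { intros s Hs. replace s with (t0 + (s - t0)) by ring. apply Hd. unfold p in Hs; lra. }
 assert (Ht1 : exists t1, t0 < t1 < t0 + T /\ z t1 = 0 /\ forall s, t0 < s < t1 -> 0 < z s).
 { destruct (classic (exists s1, p <= s1 < t0 + T /\ z s1 = 0)) as [[s1 [Hs1 Zs1]]|Hn].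
   - assert (p < s1). { destruct (Req_dec p s1) as [<-|]; lra. }
     destruct (first_zero z p s1 Hc ltac:(lra) Zp ltac:(lra)) as [t1 [Ht1 [Zt1 Hpos]]].
     exists t1. split. unfold p in *; lra. split; auto. intros s Hs.
     destruct (Rle_dec s p). apply Hnear; lra. apply Hpos; lra.
   - exfalso.
     assert (Hposall : forall s, t0 < s < t0 + T -> 0 < z s).
     { intros s Hs. destruct (Rle_dec s p). apply Hnear; lra.
       destruct (Rlt_dec 0 (z s)) as [|Hns]; auto. exfalso.
       assert (Hcz : continuity z) by (apply (deriv_continuity z dz H1)).
       destruct (IVT_cor z p s Hcz ltac:(lra) ltac:(nra)) as [r [Hr1 Hr2]].
       apply Hn. exists r; split; auto; lra. }
     apply (sturm_L q z dz (PI / T) t0 Hm Hh Z0); rewrite ?HPm; auto.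
     }
 destruct Ht1 as [t1 [Ht1 [Zt1 Hpos1]]].
 assert (G1 : T / 2 < t1 - t0).
 { rewrite <- HPM. apply (sturm_U q z dz (2 * PI / T) t0 t1 HM Hh ltac:(lra) Z0 Zt1 Hpos1).
   intros; apply Hhi. destruct (Hstrict t0 t1 ltac:(lra)) as [s [Hs Hs2]]. exists s; auto. }
 assert (D1 : dz t1 < 0).
 { assert (dz t1 <= 0) by (apply (deriv_end_nonpos z t0 t1 (dz t1) ltac:(lra) (H1 t1) Zt1 Hpos1)).
   destruct (Req_dec (dz t1) 0) as [E|]; [|lra]. exfalso.
   destruct (hill_uniq z dz t1 Hh Zt1 E p) as [Hz _]. lra. }
 destruct (loc_neg z t1 (dz t1) (H1 t1) D1) as [del1 [Hdel1 Hd1]].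
 rewrite Zt1 in Hd1.
 set (h1 := Rmin (del1 / 2) ((t0 + T - t1) / 2)).
 assert (0 < h1) by (unfold h1; apply Rmin_pos; lra).
 assert (h1 < del1) by (unfold h1; eapply Rle_lt_trans; [apply Rmin_l|lra]).
 assert (h1 <= (t0 + T - t1) / 2) by (unfold h1; apply Rmin_r).
 set (p1 := t1 + h1).
 assert (Zp1 : 0 < - z p1) by (destruct (Hd1 h1 ltac:(lra)); unfold p1; lra).
 assert (Hnear1 : forall s, t1 < s <= p1 -> 0 < - z s).
 { intros s Hs. replace s with (t1 + (s - t1)) by ring.
   destruct (Hd1 (s - t1)) as [Hq _]. unfold p1 in Hs; lra. lra. }
 assert (Hc' : ctn (fun t => - z t)).
 { apply (ctn_of_deriv _ (fun t => - dz t)). intros; apply D_opp; auto. }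
 destruct (first_zero (fun t => - z t) p1 (t0 + T) Hc' ltac:(unfold p1; lra) Zp1 ltac:(cbv beta; rewrite ZT; lra))
   as [t2 [Ht2 [Zt2 Hpos2]]].
 assert (G2 : T / 2 < t2 - t1).
 { rewrite <- HPM. apply (sturm_U q (fun t => - z t) (fun t => - dz t) (2 * PI / T) t1 t2 HM
     (hill_opp _ _ _ Hh) ltac:(unfold p1 in *; lra) ltac:(cbv beta; rewrite Zt1; ring) ltac:(lra)).
   intros s Hs. destruct (Rle_dec s p1). apply Hnear1; lra. apply Hpos2; lra.
   intros; apply Hhi. destruct (Hstrict t1 t2 ltac:(unfold p1 in *; lra)) as [s [Hs Hs2]]. exists s; auto. }
 lra.
Qed.

Lemma eigen_zero z dz mu : hill q z dz -> (forall t, z (t + T) = mu * z t) -> forall t, z t = 0.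
Proof.
 intros Hh Heig. pose proof PI_RGT_0 as Hpi.
 assert (Hm : 0 < PI / T) by (apply Rdiv_lt_0_compat; lra).
 destruct (classic (forall t, z t = 0)) as [|Hn]; auto. exfalso.
 apply not_all_ex_not in Hn. destruct Hn as [s Hs].
 destruct (zero_exists q z dz (PI / T) 0 Hm Hh ltac:(intros; apply Rlt_le; auto)) as [t0 [_ Z0]].
 destruct Hh as [H1 H2] eqn:Ehh.
 destruct (Rtotal_order (dz t0) 0) as [Hlt|[Heq|Hgt]].
 - apply (eigen_pos (fun t => - z t) (fun t => - dz t) mu t0 (hill_opp _ _ _ Hh)).
   intros t; rewrite Heig; ring. rewrite Z0; ring. lra.
 - destruct (hill_uniq z dz t0 Hh Z0 Heq s). auto.
 - apply (eigen_pos z dz mu t0 Hh Heig Z0 Hgt).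
Qed.

Lemma hill_zero_all z dz : hill q z dz -> (forall t, z t = 0) -> forall t, dz t = 0.
Proof. intros [H1 _] H0 t. apply (deriv_zero_fun z t); auto. Qed.

Lemma hill_eqfun z dz w dw : hill q z dz -> hill q w dw -> z 0 = w 0 -> dz 0 = dw 0 ->
  forall t, z t = w t /\ dz t = dw t.
Proof.
 intros H1 H2 E1 E2 t.
 destruct (hill_uniq (fun t => 1 * z t + (-1) * w t) (fun t => 1 * dz t + (-1) * dw t) 0
   (hill_lin 1 (-1) z dz w dw H1 H2) ltac:(cbv beta; rewrite E1; ring) ltac:(cbv beta; rewrite E2; ring) t).
 split; lra.
Qed.

Lemma cover_t t : 0 <= t -> exists n : nat, INR n * T <= t <= INR n * T + T.
Proof.
 intros Ht. destruct (archimed (t / T)) as [Hu1 Hu2].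
 assert (Htt : 0 <= t / T) by (apply Rdiv_le_0_compat; lra).
 assert (Hup : (1 <= up (t / T))%Z). { assert (0 < IZR (up (t/T))) by lra.
   apply lt_IZR in H. lia. }
 exists (Z.to_nat (up (t / T) - 1)).
 rewrite INR_IZR_INZ, Znat.Z2Nat.id by lia. rewrite minus_IZR.
 assert (IZR (up (t / T)) - 1 <= t / T) by lra.
 assert (t / T <= IZR (up (t / T))) by lra.
 split.
 - apply (Rmult_le_reg_r (/ T)). apply Rinv_0_lt_compat; lra.
   replace ((IZR (up (t / T)) - 1) * T * / T) with (IZR (up (t / T)) - 1) by (field; lra). exact H.
 - apply (Rmult_le_reg_r (/ T)). apply Rinv_0_lt_compat; lra.
   replace (((IZR (up (t / T)) - 1) * T + T) * / T) with (IZR (up (t / T))) by (field; lra). exact H0.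
Qed.

Lemma hill_bounded z dz : hill q z dz -> exists C, forall t, 0 <= t -> z t ^ 2 + dz t ^ 2 <= C.
Proof.
 intros Hh.
 set (x0 := z 0). set (v0 := dz 0). set (x1 := z (0 + T)). set (v1 := dz (0 + T)).
 set (x2 := z (0 + T + T)). set (v2 := dz (0 + T + T)).
 destruct (classic (x0 = 0 /\ v0 = 0)) as [[E1 E2]|Hnz].
 { exists 0. intros t _. destruct (hill_uniq z dz 0 Hh E1 E2 t) as [-> ->]. lra. }
 assert (HN : 0 < x0 ^ 2 + v0 ^ 2).
 { destruct (Req_dec x0 0). assert (v0 <> 0) by tauto. nra. nra. }
 set (det := x0 * v1 - v0 * x1).
 assert (Hh1 := hill_shift z dz Hh).
 assert (Hh2 := hill_shift _ _ Hh1).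
 destruct (Req_dec det 0) as [Hd0|Hd].
 { exfalso. set (mu := (x1 * x0 + v1 * v0) / (x0 ^ 2 + v0 ^ 2)).
   assert (Heq := hill_eqfun (fun t => 1 * z (t + T) + (- mu) * z t) (fun t => 1 * dz (t + T) + (- mu) * dz t)
     (fun _ => 0) (fun _ => 0) (hill_lin 1 (-mu) _ _ _ _ Hh1 Hh)
     ltac:(split; intros; [apply D_const|eapply D_eq; [apply D_const|ring]])).
   assert (A1 : 1 * z (0 + T) + - mu * z 0 = 0).
   { fold x1 x0. replace (1 * x1 + - mu * x0) with (v0 * (x1 * v0 - v1 * x0) / (x0^2+v0^2)) by (unfold mu; field; lra).
     replace (x1 * v0 - v1 * x0) with (- det) by (unfold det; ring). rewrite Hd0. field; lra. }
   assert (A2 : 1 * dz (0 + T) + - mu * dz 0 = 0).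
   { fold v1 v0. replace (1 * v1 + - mu * v0) with (x0 * det / (x0^2+v0^2)) by (unfold mu, det; field; lra).
     rewrite Hd0. field; lra. }
   specialize (Heq A1 A2).
   assert (Hz := eigen_zero z dz mu Hh ltac:(intros t; destruct (Heq t) as [E _]; lra)).
   apply Hnz. split. apply Hz. apply (hill_zero_all z dz Hh Hz). }
 set (a := (x2 * v0 - v2 * x0) / (x1 * v0 - v1 * x0)).
 set (b := (x1 * v2 - v1 * x2) / (x1 * v0 - v1 * x0)).
 assert (Hd' : x1 * v0 - v1 * x0 <> 0) by (unfold det in Hd; lra).
 assert (Hrec := hill_eqfun (fun t => z (t + T + T)) (fun t => dz (t + T + T))
   (fun t => a * z (t + T) + b * z t) (fun t => a * dz (t + T) + b * dz t) Hh2
   (hill_lin a b _ _ _ _ Hh1 Hh)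
   ltac:(cbv beta; fold x2 x1 x0; unfold a, b; field; auto)
   ltac:(cbv beta; fold v2 v1 v0; unfold a, b; field; auto)).
 assert (Hw : forall s, z s * dz (s + T) - dz s * z (s + T) = det).
 { intros s. unfold det, x0, v0, x1, v1.
   destruct Hh as [H1 H2]. destruct Hh1 as [H3 H4].
   apply (const_deriv0 (fun s => z s * dz (s + T) - dz s * z (s + T)) (fun _ => 0)).
   intros t. eapply D_eq. apply D_minus; apply D_mult; auto. cbv beta. ring.
   auto. }
 assert (Hb : b = -1).
 { pose proof (Hw (0 + T)) as HwT.
   destruct (Hrec 0) as [R1 R2]. fold x2 v2 x1 v1 x0 v0 in R1, R2, HwT.
   fold x1 v1 in HwT. rewrite R1, R2 in HwT. unfold det in HwT.
   apply (Rmult_eq_reg_r (x1 * v0 - v1 * x0)); auto.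
   replace (-1 * (x1 * v0 - v1 * x0)) with (x0 * v1 - v0 * x1) by ring. rewrite <- HwT. ring. }
 assert (Ha : Rabs a < 2).
 { destruct (Rlt_dec (Rabs a) 2) as [|Hge]; auto. exfalso.
   assert (Hdisc : 0 <= a * a - 4).
   { unfold Rabs in Hge; destruct (Rcase_abs a); nra. }
   set (lam := (a + sqrt (a * a - 4)) / 2).
   assert (Hsq := sqrt_sqrt (a * a - 4) Hdisc).
   assert (Hlam : lam * lam - a * lam + 1 = 0) by (unfold lam; nra).
   assert (Hl0 : lam <> 0) by (intro E; rewrite E in Hlam; lra).
   assert (Hh3 := hill_lin 1 (- lam) _ _ _ _ Hh1 Hh).
   assert (Heig : forall t, (fun t => 1 * z (t + T) + - lam * z t) (t + T)
                 = / lam * (fun t => 1 * z (t + T) + - lam * z t) t).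
   { intros t. cbv beta. destruct (Hrec t) as [R1 _]. cbv beta in R1. rewrite R1, Hb.
     assert (Ha' : a = lam + / lam).
     { apply (Rmult_eq_reg_l lam); auto. field_simplify; auto. lra. }
     rewrite Ha'. field; auto. }
   assert (Hz := eigen_zero _ _ (/ lam) Hh3 Heig).
   assert (Hdz := hill_zero_all _ _ Hh3 Hz).
   specialize (Hz 0). specialize (Hdz 0). cbv beta in Hz, Hdz. fold x1 x0 in Hz. fold v1 v0 in Hdz.
   apply Hd. unfold det. replace x1 with (lam * x0) by lra. replace v1 with (lam * v0) by lra. ring. }
 set (X := fun n : nat => z (INR n * T)). set (V := fun n : nat => dz (INR n * T)).
 assert (HX : forall n, X (S (S n)) = a * X (S n) - X n /\ V (S (S n)) = a * V (S n) - V n).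
 { intros n. destruct (Hrec (INR n * T)) as [R1 R2]. cbv beta in R1, R2. rewrite Hb in R1, R2.
   unfold X, V. rewrite !S_INR.
   replace ((INR n + 1 + 1) * T) with (INR n * T + T + T) by ring.
   replace ((INR n + 1) * T) with (INR n * T + T) by ring. split; lra. }
 set (I := fun n => X (S n) ^ 2 - a * X (S n) * X n + X n ^ 2 + (V (S n) ^ 2 - a * V (S n) * V n + V n ^ 2)).
 assert (HI : forall n, I n = I 0%nat).
 { induction n. auto. rewrite <- IHn. unfold I. destruct (HX n) as [E1 E2]. rewrite E1, E2. ring. }
 assert (HIb : forall n, (1 - Rabs a / 2) * (X n ^ 2 + V n ^ 2) <= I n).
 { intros n. unfold I.
   assert (Q1 : a * X (S n) * X n <= Rabs a / 2 * (X (S n) ^ 2 + X n ^ 2)).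
   { unfold Rabs; destruct (Rcase_abs a).
     assert (0 <= (-a) * (X (S n) + X n) ^ 2) by (apply Rmult_le_pos; [lra|apply pow2_ge_0]). nra.
     assert (0 <= a * (X (S n) - X n) ^ 2) by (apply Rmult_le_pos; [lra|apply pow2_ge_0]). nra. }
   assert (Q2 : a * V (S n) * V n <= Rabs a / 2 * (V (S n) ^ 2 + V n ^ 2)).
   { unfold Rabs; destruct (Rcase_abs a).
     assert (0 <= (-a) * (V (S n) + V n) ^ 2) by (apply Rmult_le_pos; [lra|apply pow2_ge_0]). nra.
     assert (0 <= a * (V (S n) - V n) ^ 2) by (apply Rmult_le_pos; [lra|apply pow2_ge_0]). nra. }
   assert (0 <= X (S n) ^ 2) by apply pow2_ge_0. assert (0 <= V (S n) ^ 2) by apply pow2_ge_0.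
   pose proof (Rabs_pos a). nra. }
 set (B := I 0%nat / (1 - Rabs a / 2)).
 assert (HB : forall n, z (INR n * T) ^ 2 + dz (INR n * T) ^ 2 <= B).
 { intros n. unfold B. rewrite <- (HI n). apply (Rmult_le_reg_l (1 - Rabs a / 2)). lra.
   replace ((1 - Rabs a / 2) * (I n / (1 - Rabs a / 2))) with (I n) by (field; lra).
   apply HIb. }
 exists (B * exp (Kq * T)). intros t Ht.
 destruct (cover_t t Ht) as [n [Hn1 Hn2]].
 eapply Rle_trans. apply (hill_growth z dz (INR n * T) t Hh Hn1).
 apply Rmult_le_compat. apply Rplus_le_le_0_compat; apply pow2_ge_0. apply Rlt_le, exp_pos.
 apply HB. destruct (Req_dec (t - INR n * T) T) as [->|]. lra.
 apply Rlt_le, exp_increasing. assert (0 < Kq). { unfold Kq. assert (0 <= 2 * PI / T * (2 * PI / T)) by nra. lra. }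
 apply Rmult_lt_compat_l; lra.
Qed.

Lemma abs_lt_of_sq x e : 0 < e -> x ^ 2 < e ^ 2 -> Rabs x < e.
Proof. intros He H. unfold Rabs; destruct (Rcase_abs x); nra. Qed.

Lemma sq_le_of_abs x d : Rabs x < d -> x ^ 2 <= d ^ 2.
Proof. intros H. unfold Rabs in H; destruct (Rcase_abs x); nra. Qed.

Definition STAB := forall eps : R, 0 < eps ->
  exists delta : R, 0 < delta /\
  forall xi dxi : R -> R,
    (forall t, is_derive xi t (dxi t)) ->
    (forall t, is_derive dxi t (- (q t * xi t))) ->
    Rabs (xi 0) < delta -> Rabs (dxi 0) < delta ->
    forall t, 0 <= t -> Rabs (xi t) < eps /\ Rabs (dxi t) < eps.

Lemma stable_of_L : (exists L, 0 <= L /\ forall z dz, hill q z dz -> forall t, 0 <= t ->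
   z t ^ 2 + dz t ^ 2 <= L * (z 0 ^ 2 + dz 0 ^ 2)) -> STAB.
Proof.
 intros [L [HL H]] eps He. exists (eps / (2 * L + 2)). split. apply Rdiv_lt_0_compat; lra.
 intros xi dxi H1 H2 Hx Hv t Ht.
 set (d := eps / (2 * L + 2)) in *.
 assert (Hd : 0 < d) by (unfold d; apply Rdiv_lt_0_compat; lra).
 assert (Hb := H xi dxi (conj H1 H2) t Ht).
 apply sq_le_of_abs in Hx. apply sq_le_of_abs in Hv.
 assert (Hkey : 2 * L * d ^ 2 < eps ^ 2).
 { unfold d. replace (2 * L * (eps / (2 * L + 2)) ^ 2) with (eps ^ 2 * (2 * L / (2 * L + 2) ^ 2)) by (field; lra).
   assert (2 * L / (2 * L + 2) ^ 2 < 1).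
   { apply (Rmult_lt_reg_r ((2 * L + 2) ^ 2)). nra.
     replace (2 * L / (2 * L + 2) ^ 2 * (2 * L + 2) ^ 2) with (2 * L) by (field; lra). nra. }
   assert (0 < eps ^ 2) by nra. nra. }
 assert (L * (xi 0 ^ 2 + dxi 0 ^ 2) <= 2 * L * d ^ 2) by nra.
 assert (0 <= xi t ^ 2) by apply pow2_ge_0. assert (0 <= dxi t ^ 2) by apply pow2_ge_0.
 split; apply abs_lt_of_sq; auto; lra.
Qed.

Lemma hill_stable : STAB.
Proof.
 apply stable_of_L.
 destruct (classic (exists z1 dz1 z2 dz2, hill q z1 dz1 /\ hill q z2 dz2 /\
    z1 0 * dz2 0 - dz1 0 * z2 0 <> 0)) as [[z1 [dz1 [z2 [dz2 [Hh1 [Hh2 HD]]]]]]|HnA].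
 - destruct (hill_bounded z1 dz1 Hh1) as [C1 HC1].
   destruct (hill_bounded z2 dz2 Hh2) as [C2 HC2].
   set (D := z1 0 * dz2 0 - dz1 0 * z2 0) in *.
   assert (HC1p : 0 <= C1) by (specialize (HC1 0 ltac:(lra)); nra).
   assert (HC2p : 0 <= C2) by (specialize (HC2 0 ltac:(lra)); nra).
   assert (HD2 : 0 < D ^ 2) by (apply pow2_gt_0; auto).
   exists (2 * (C1 * (z2 0 ^ 2 + dz2 0 ^ 2) + C2 * (z1 0 ^ 2 + dz1 0 ^ 2)) / D ^ 2).
   split. apply Rdiv_le_0_compat; auto. apply Rmult_le_pos. lra.
   apply Rplus_le_le_0_compat; apply Rmult_le_pos; auto; apply Rplus_le_le_0_compat; apply pow2_ge_0.
   intros z dz Hh t Ht.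
   set (c1 := (z 0 * dz2 0 - dz 0 * z2 0) / D).
   set (c2 := (z1 0 * dz 0 - dz1 0 * z 0) / D).
   destruct (hill_eqfun z dz (fun t => c1 * z1 t + c2 * z2 t) (fun t => c1 * dz1 t + c2 * dz2 t)
     Hh (hill_lin c1 c2 _ _ _ _ Hh1 Hh2) ltac:(cbv beta; unfold c1, c2, D; field; auto)
     ltac:(cbv beta; unfold c1, c2, D; field; auto) t) as [E1 E2].
   rewrite E1, E2.
   specialize (HC1 t Ht). specialize (HC2 t Ht).
   assert (S1 : (c1 * z1 t + c2 * z2 t) ^ 2 + (c1 * dz1 t + c2 * dz2 t) ^ 2
      <= 2 * (c1 ^ 2 * (z1 t ^ 2 + dz1 t ^ 2) + c2 ^ 2 * (z2 t ^ 2 + dz2 t ^ 2))).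
   { assert (0 <= (c1 * z1 t - c2 * z2 t) ^ 2) by apply pow2_ge_0.
     assert (0 <= (c1 * dz1 t - c2 * dz2 t) ^ 2) by apply pow2_ge_0. nra. }
   assert (Hc1 : c1 ^ 2 <= (z 0 ^ 2 + dz 0 ^ 2) * (z2 0 ^ 2 + dz2 0 ^ 2) / D ^ 2).
   { unfold c1. replace (((z 0 * dz2 0 - dz 0 * z2 0) / D) ^ 2) with ((z 0 * dz2 0 - dz 0 * z2 0) ^ 2 / D ^ 2) by (field; auto).
     apply Rmult_le_compat_r. apply Rlt_le, Rinv_0_lt_compat; auto.
     assert (0 <= (z 0 * z2 0 + dz 0 * dz2 0) ^ 2) by apply pow2_ge_0. nra. }
   assert (Hc2 : c2 ^ 2 <= (z 0 ^ 2 + dz 0 ^ 2) * (z1 0 ^ 2 + dz1 0 ^ 2) / D ^ 2).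
   { unfold c2. replace (((z1 0 * dz 0 - dz1 0 * z 0) / D) ^ 2) with ((z1 0 * dz 0 - dz1 0 * z 0) ^ 2 / D ^ 2) by (field; auto).
     apply Rmult_le_compat_r. apply Rlt_le, Rinv_0_lt_compat; auto.
     assert (0 <= (z 0 * z1 0 + dz 0 * dz1 0) ^ 2) by apply pow2_ge_0. nra. }
   eapply Rle_trans. apply S1.
   assert (0 <= c1 ^ 2) by apply pow2_ge_0. assert (0 <= c2 ^ 2) by apply pow2_ge_0.
   assert (0 <= z1 t ^ 2 + dz1 t ^ 2) by (apply Rplus_le_le_0_compat; apply pow2_ge_0).
   assert (0 <= z2 t ^ 2 + dz2 t ^ 2) by (apply Rplus_le_le_0_compat; apply pow2_ge_0).
   apply Rle_trans with (2 * (c1 ^ 2 * C1 + c2 ^ 2 * C2)).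
   { apply Rmult_le_compat_l. lra. apply Rplus_le_compat; apply Rmult_le_compat_l; auto. }
   apply Rle_trans with (2 * ((z 0 ^ 2 + dz 0 ^ 2) * (z2 0 ^ 2 + dz2 0 ^ 2) / D ^ 2 * C1
      + (z 0 ^ 2 + dz 0 ^ 2) * (z1 0 ^ 2 + dz1 0 ^ 2) / D ^ 2 * C2)).
   { apply Rmult_le_compat_l. lra. apply Rplus_le_compat; apply Rmult_le_compat_r; auto. }
   right. field. auto.
 - destruct (classic (exists z0 dz0, hill q z0 dz0 /\ (z0 0 <> 0 \/ dz0 0 <> 0))) as [[z0 [dz0 [Hh0 Hnz]]]|HnB].
   + destruct (hill_bounded z0 dz0 Hh0) as [C0 HC0].
     assert (HN : 0 < z0 0 ^ 2 + dz0 0 ^ 2).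
     { destruct Hnz as [Hn|Hn]; assert (0 < _ ^ 2) by (apply pow2_gt_0; exact Hn);
       assert (0 <= z0 0 ^ 2) by apply pow2_ge_0; assert (0 <= dz0 0 ^ 2) by apply pow2_ge_0; lra. }
     assert (HC0p : 0 <= C0) by (specialize (HC0 0 ltac:(lra)); nra).
     exists (C0 / (z0 0 ^ 2 + dz0 0 ^ 2)). split. apply Rdiv_le_0_compat; lra.
     intros z dz Hh t Ht.
     assert (Hdet : z 0 * dz0 0 - dz 0 * z0 0 = 0).
     { destruct (Req_dec (z 0 * dz0 0 - dz 0 * z0 0) 0) as [|Hne]; auto. exfalso.
       apply HnA. exists z, dz, z0, dz0. auto. }
     set (c := (z 0 * z0 0 + dz 0 * dz0 0) / (z0 0 ^ 2 + dz0 0 ^ 2)).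
     assert (F1 : z 0 = c * z0 0 + 0 * z0 0).
     { assert (Hq : z 0 - (c * z0 0 + 0 * z0 0) = dz0 0 * (z 0 * dz0 0 - dz 0 * z0 0) / (z0 0 ^ 2 + dz0 0 ^ 2))
         by (unfold c; field; lra). rewrite Hdet in Hq. unfold Rdiv in Hq. lra. }
     assert (F2 : dz 0 = c * dz0 0 + 0 * dz0 0).
     { assert (Hq : dz 0 - (c * dz0 0 + 0 * dz0 0) = - z0 0 * (z 0 * dz0 0 - dz 0 * z0 0) / (z0 0 ^ 2 + dz0 0 ^ 2))
         by (unfold c; field; lra). rewrite Hdet in Hq. unfold Rdiv in Hq. lra. }
     destruct (hill_eqfun z dz (fun t => c * z0 t + 0 * z0 t) (fun t => c * dz0 t + 0 * dz0 t)
       Hh (hill_lin c 0 _ _ _ _ Hh0 Hh0)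
       ltac:(cbv beta; exact F1) ltac:(cbv beta; exact F2) t) as [E1 E2].
     rewrite E1, E2. specialize (HC0 t Ht).
     assert (Hc : c ^ 2 <= (z 0 ^ 2 + dz 0 ^ 2) / (z0 0 ^ 2 + dz0 0 ^ 2)).
     { unfold c. replace (((z 0 * z0 0 + dz 0 * dz0 0) / (z0 0 ^ 2 + dz0 0 ^ 2)) ^ 2)
         with ((z 0 * z0 0 + dz 0 * dz0 0) ^ 2 / (z0 0 ^ 2 + dz0 0 ^ 2) / (z0 0 ^ 2 + dz0 0 ^ 2)) by (field; lra).
       apply Rmult_le_compat_r. apply Rlt_le, Rinv_0_lt_compat; auto.
       apply (Rmult_le_reg_r (z0 0 ^ 2 + dz0 0 ^ 2)); auto.
       replace ((z 0 * z0 0 + dz 0 * dz0 0) ^ 2 / (z0 0 ^ 2 + dz0 0 ^ 2) * (z0 0 ^ 2 + dz0 0 ^ 2))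
         with ((z 0 * z0 0 + dz 0 * dz0 0) ^ 2) by (field; lra).
       assert (0 <= (z 0 * dz0 0 - dz 0 * z0 0) ^ 2) by apply pow2_ge_0. nra. }
     replace ((c * z0 t + 0 * z0 t) ^ 2 + (c * dz0 t + 0 * dz0 t) ^ 2) with (c ^ 2 * (z0 t ^ 2 + dz0 t ^ 2)) by ring.
     assert (0 <= c ^ 2) by apply pow2_ge_0.
     assert (0 <= z0 t ^ 2 + dz0 t ^ 2) by (apply Rplus_le_le_0_compat; apply pow2_ge_0).
     apply Rle_trans with ((z 0 ^ 2 + dz 0 ^ 2) / (z0 0 ^ 2 + dz0 0 ^ 2) * C0).
     apply Rmult_le_compat; auto. right; field; lra.
   + exists 0. split. lra. intros z dz Hh t Ht.
     assert (E : z 0 = 0 /\ dz 0 = 0).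
     { destruct (Req_dec (z 0) 0); destruct (Req_dec (dz 0) 0); auto; exfalso; apply HnB; exists z, dz; auto. }
     destruct E as [E1 E2]. destruct (hill_uniq z dz 0 Hh E1 E2 t) as [-> ->]. lra.
Qed.
End Hill.

Definition duff (y dy : R -> R) :=
  (forall t, is_derive y t (dy t)) /\ (forall t, is_derive dy t (- (3 * y t + 3 / 2 * y t ^ 3))).

Definition En (u v : R) := v ^ 2 / 2 + 3 / 2 * u ^ 2 + 3 / 8 * u ^ 4.

Lemma duff_energy y dy : duff y dy -> forall t, En (y t) (dy t) = En (y 0) (dy 0).
Proof.
 intros [H1 H2] t. unfold En.
 apply (const_deriv0 (fun t => dy t ^ 2 / 2 + 3 / 2 * y t ^ 2 + 3 / 8 * y t ^ 4) (fun _ => 0)); auto.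
 intros x.
 assert (Hq : forall t : R, dy t ^ 2 / 2 = / 2 * dy t ^ 2) by (intros; field).
 apply (is_derive_ext (fun t => / 2 * dy t ^ 2 + 3 / 2 * y t ^ 2 + 3 / 8 * y t ^ 4)).
 intros; rewrite Hq; auto.
 eapply D_eq. apply D_plus. apply D_plus.
 apply D_scal. apply D_sq. apply H2.
 apply D_scal. apply D_sq. apply H1. apply D_scal. apply D_p4. apply H1.
 field.
Qed.

Lemma duff_hill y dy : duff y dy -> hill (fun t => 3 + 3 / 2 * y t ^ 2) y dy.
Proof. intros [H1 H2]; split; auto. intros t; eapply D_eq. apply H2. ring. Qed.

Lemma duff_opp y dy : duff y dy -> duff (fun t => - y t) (fun t => - dy t).
Proof. intros [H1 H2]; split; intros t. apply D_opp; auto.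
 eapply D_eq. apply D_opp. apply H2. ring. Qed.

Lemma duff_refl y dy c : duff y dy -> duff (fun t => y (c - t)) (fun t => - dy (c - t)).
Proof. intros [H1 H2]; split; intros t. apply D_refl; auto.
 eapply D_eq. apply D_opp. apply (D_refl dy (fun t => - (3 * y t + 3 / 2 * y t ^ 3))); auto. ring. Qed.

Lemma duff_refl_opp y dy c : duff y dy -> duff (fun t => - y (c - t)) (fun t => dy (c - t)).
Proof. intros [H1 H2]; split; intros t. eapply D_eq. apply D_opp. apply D_refl; auto. ring.
 eapply D_eq. apply (D_refl dy (fun t => - (3 * y t + 3 / 2 * y t ^ 3))); auto. ring. Qed.

Lemma prod_bound c K u v : - K <= c <= K -> Rabs (2 * c * u * v) <= K * (u ^ 2 + v ^ 2).
Proof.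
 intros Hc. apply Rabs_le2.
 assert (0 <= (K - c) * (u + v)^2) by (apply Rmult_le_pos; [lra|apply pow2_ge_0]).
 assert (0 <= (K + c) * (u - v)^2) by (apply Rmult_le_pos; [lra|apply pow2_ge_0]).
 assert (0 <= (K + c) * (u + v)^2) by (apply Rmult_le_pos; [lra|apply pow2_ge_0]).
 assert (0 <= (K - c) * (u - v)^2) by (apply Rmult_le_pos; [lra|apply pow2_ge_0]).
 split; nra.
Qed.

Lemma duff_uniq y1 dy1 y2 dy2 B t0 : duff y1 dy1 -> duff y2 dy2 ->
  (forall t, y1 t ^ 2 <= B) -> (forall t, y2 t ^ 2 <= B) ->
  y1 t0 = y2 t0 -> dy1 t0 = dy2 t0 -> forall t, y1 t = y2 t.
Proof.
 intros [H1 H2] [H3 H4] B1 B2 E1 E2 t.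
 set (L := fun t => 3 + 3 / 2 * (y1 t ^ 2 + y1 t * y2 t + y2 t ^ 2)).
 assert (Hf := gron_zero (fun t => (y1 t - y2 t) ^ 2 + (dy1 t - dy2 t) ^ 2)
   (fun t => 2 * (1 - L t) * (y1 t - y2 t) * (dy1 t - dy2 t)) (2 + 9 / 2 * B) t0).
 assert (Hd : forall x, is_derive (fun t => (y1 t - y2 t) ^ 2 + (dy1 t - dy2 t) ^ 2) x
   (2 * (1 - L x) * (y1 x - y2 x) * (dy1 x - dy2 x))).
 { intros x. eapply D_eq. apply D_plus; apply D_sq; apply D_minus; auto. unfold L; ring. }
 specialize (Hf Hd ltac:(intros; apply Rplus_le_le_0_compat; apply pow2_ge_0)).
 assert (Hb : forall x, Rabs (2 * (1 - L x) * (y1 x - y2 x) * (dy1 x - dy2 x)) <=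
    (2 + 9 / 2 * B) * ((y1 x - y2 x) ^ 2 + (dy1 x - dy2 x) ^ 2)).
 { intros x. apply prod_bound. specialize (B1 x). specialize (B2 x). unfold L.
   assert (0 <= (y1 x + y2 x) ^ 2) by apply pow2_ge_0. assert (0 <= (y1 x - y2 x) ^ 2) by apply pow2_ge_0.
   assert (E3 : y1 x ^ 2 + y1 x * y2 x + y2 x ^ 2 = ((y1 x + y2 x) ^ 2 + y1 x ^ 2 + y2 x ^ 2) / 2) by field.
   assert (E4 : y1 x * y2 x = (y1 x ^ 2 + y2 x ^ 2 - (y1 x - y2 x) ^ 2) / 2) by field.
   assert (0 <= y1 x ^ 2) by apply pow2_ge_0. assert (0 <= y2 x ^ 2) by apply pow2_ge_0.
   split; lra. }
 specialize (Hf Hb ltac:(cbv beta; rewrite E1, E2; ring) t). cbv beta in Hf.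
 assert (0 <= (y1 t - y2 t) ^ 2) by apply pow2_ge_0. assert (0 <= (dy1 t - dy2 t) ^ 2) by apply pow2_ge_0.
 assert (Hz : (y1 t - y2 t) ^ 2 = 0) by lra. assert (y1 t - y2 t = 0) by nra. lra.
Qed.

Lemma asin_deriv (f : R -> R) df x : is_derive f x df -> -1 < f x < 1 ->
  derivable_pt_lim (fun t => asin (f t)) x (/ sqrt (1 - (f x)²) * df).
Proof.
 intros H Hr. apply is_derive_Reals in H.
 assert (Ha : derivable_pt_lim asin (f x) (1 / sqrt (1 - (f x)²))).
 { apply (derive_pt_eq_1 asin (f x) _ (derivable_pt_asin (f x) Hr)). apply derive_pt_asin. }
 pose proof (derivable_pt_lim_comp f asin x df _ H Ha) as Hc.
 unfold comp in Hc. replace (/ sqrt (1 - (f x)²) * df) with (1 / sqrt (1 - (f x)²) * df) by (unfold Rdiv; ring).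
 exact Hc.
Qed.

Section Core.
Variables y dy : R -> R.
Hypothesis Hd : duff y dy.
Variable E0 : R.
Hypothesis HE : forall t, En (y t) (dy t) = E0.
Hypothesis HE0 : 0 < E0.

Lemma y_bound t : y t ^ 2 <= 2 * E0 / 3.
Proof. specialize (HE t). unfold En in HE. assert (0 <= dy t ^ 2) by apply pow2_ge_0.
 assert (0 <= y t ^ 4) by (replace (y t ^ 4) with ((y t ^ 2) ^ 2) by ring; apply pow2_ge_0). lra. Qed.

Variable z0 : R.
Hypothesis Hz0 : y z0 = 0.
Hypothesis Hdz0 : 0 < dy z0.

Lemma core : exists T A t1, 0 < A /\ 3 / 2 * A ^ 2 + 3 / 8 * A ^ 4 = E0 /\ y t1 = A /\
  (forall t, y t ^ 2 <= A ^ 2) /\ (forall t, y (t + T) = - y t) /\ 0 < T /\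
  (PI / T) * (PI / T) < 4 + 3 / 2 * A ^ 2 /\ 3 + 3 / 4 * A ^ 2 <= (PI / T) * (PI / T).
Proof.
 destruct Hd as [H1 H2] eqn:EHd.
 pose proof PI_RGT_0 as Hpi.
 assert (Hc : ctn y) by (apply (ctn_of_deriv y dy H1)).
 destruct (loc_pos y z0 (dy z0) (H1 z0) Hdz0) as [del [Hdel Hloc]]. rewrite Hz0 in Hloc.
 set (p := z0 + del / 2).
 assert (Yp : 0 < y p) by (apply Hloc; lra).
 assert (Hnear : forall s, z0 < s <= p -> 0 < y s).
 { intros s Hs. replace s with (z0 + (s - z0)) by ring. apply Hloc. unfold p in Hs; lra. }
 assert (Hs3 : 0 < sqrt 3) by (apply sqrt_lt_R0; lra).
 destruct (zero_exists (fun t => 3 + 3 / 2 * y t ^ 2) y dy (sqrt 3) p Hs3 (duff_hill y dy Hd))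
   as [s1 [Hs1 Ys1]].
 { intros t. rewrite sqrt_sqrt by lra. pose proof (pow2_ge_0 (y t)). lra. }
 assert (p < s1) by (destruct (Req_dec p s1) as [<-|]; lra).
 destruct (first_zero y p s1 Hc ltac:(lra) Yp ltac:(lra)) as [z1 [Hz1 [Yz1 Hpos1]]].
 assert (Hpos : forall s, z0 < s < z1 -> 0 < y s).
 { intros s Hs. destruct (Rle_dec s p). apply Hnear; lra. apply Hpos1; lra. }
 assert (Hz01 : z0 < z1) by (unfold p in Hz1; lra).
 assert (Dz1 : dy z1 < 0).
 { assert (dy z1 <= 0) by (apply (deriv_end_nonpos y z0 z1 (dy z1) Hz01 (H1 z1) Yz1 Hpos)).
   destruct (Req_dec (dy z1) 0) as [E|]; [|lra]. exfalso.
   specialize (HE z1). unfold En in HE. rewrite E, Yz1 in HE. lra. }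
 set (f := fun s => - dy (z1 - s)).
 assert (Hcf : ctn f).
 { apply (ctn_of_deriv f (fun s => - - (- (3 * y (z1 - s) + 3 / 2 * y (z1 - s) ^ 3)))).
   intros s. unfold f. apply D_opp. apply (D_refl dy (fun t => - (3 * y t + 3 / 2 * y t ^ 3))); auto. }
 destruct (first_zero f 0 (z1 - z0) Hcf ltac:(lra) ltac:(unfold f; rewrite Rminus_0_r; lra)
   ltac:(unfold f; replace (z1 - (z1 - z0)) with z0 by ring; lra)) as [c [Hcc [Fc Fpos]]].
 unfold f in Fc, Fpos.
 set (t1 := z1 - c).
 assert (Dt1 : dy t1 = 0) by (unfold t1; lra).
 assert (Ht1 : z0 < t1 < z1).
 { unfold t1. split; [|lra]. destruct (Req_dec c (z1 - z0)) as [E|]; [|lra].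
   rewrite E in Fc. replace (z1 - (z1 - z0)) with z0 in Fc by ring. lra. }
 assert (Dneg : forall t, t1 < t <= z1 -> dy t < 0).
 { intros t Ht. specialize (Fpos (z1 - t) ltac:(unfold t1 in Ht; lra)).
   replace (z1 - (z1 - t)) with t in Fpos by ring. lra. }
 set (A := y t1).
 assert (HA : 0 < A) by (apply Hpos; lra).
 assert (HGA : 3 / 2 * A ^ 2 + 3 / 8 * A ^ 4 = E0).
 { specialize (HE t1). unfold En in HE. rewrite Dt1 in HE. unfold A. lra. }
 assert (Hyb : forall t, y t ^ 2 <= A ^ 2).
 { intros t. specialize (HE t). unfold En in HE.
   destruct (Rle_dec (y t ^ 2) (A ^ 2)) as [|Hn]; auto. exfalso.
   assert (0 <= dy t ^ 2) by apply pow2_ge_0.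
   assert (A ^ 4 = (A^2)^2) by ring. assert (y t ^ 4 = (y t ^2)^2) by ring.
   assert (0 <= A ^ 2) by apply pow2_ge_0. nra. }
 assert (R1 : forall t, y (2 * t1 - t) = y t).
 { intros t. apply (duff_uniq (fun t => y (2 * t1 - t)) (fun t => - dy (2 * t1 - t)) y dy (2 * E0 / 3) t1
     (duff_refl y dy (2 * t1) Hd) Hd ltac:(intros; apply y_bound) y_bound).
   cbv beta; replace (2 * t1 - t1) with t1 by ring; auto.
   cbv beta; replace (2 * t1 - t1) with t1 by ring; rewrite Dt1; ring. }
 assert (R2 : forall t, - y (2 * z1 - t) = y t).
 { intros t. apply (duff_uniq (fun t => - y (2 * z1 - t)) (fun t => dy (2 * z1 - t)) y dy (2 * E0 / 3) z1
     (duff_refl_opp y dy (2 * z1) Hd) Hd).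
   intros u; cbv beta. replace ((- y (2 * z1 - u)) ^ 2) with (y (2 * z1 - u) ^ 2) by ring. apply y_bound.
   apply y_bound.
   cbv beta; replace (2 * z1 - z1) with z1 by ring; rewrite Yz1; ring.
   cbv beta; replace (2 * z1 - z1) with z1 by ring; auto. }
 set (T := 2 * (z1 - t1)).
 assert (Hper : forall t, y (t + T) = - y t).
 { intros t. rewrite <- (R2 (t + T)). replace (2 * z1 - (t + T)) with (2 * t1 - t) by (unfold T; ring).
   rewrite R1; auto. }
 assert (HT : 0 < T) by (unfold T; lra).
 set (M := sqrt (4 + 3 / 2 * A ^ 2)).
 assert (HA2 : 0 <= A ^ 2) by apply pow2_ge_0.
 assert (HM2 : M * M = 4 + 3 / 2 * A ^ 2) by (unfold M; apply sqrt_sqrt; lra).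
 assert (HM : 0 < M) by (unfold M; apply sqrt_lt_R0; lra).
 assert (Low : PI / M < T).
 { replace T with (z1 - (2 * t1 - z1)) by (unfold T; ring).
   apply (sturm_U (fun t => 3 + 3 / 2 * y t ^ 2) y dy M (2 * t1 - z1) z1 HM (duff_hill y dy Hd)).
   lra. rewrite R1; auto. auto.
   intros s Hs. destruct (Rle_dec s t1). rewrite <- R1. apply Hpos; lra. apply Hpos; lra.
   intros s _. specialize (Hyb s). lra.
   exists t1. split. lra. specialize (Hyb t1). lra. }
 assert (Low2 : (PI / T) * (PI / T) < 4 + 3 / 2 * A ^ 2).
 { rewrite <- HM2. assert (PI / T < M).
   { apply (Rmult_lt_reg_r T); auto. replace (PI / T * T) with PI by (field; lra).
     apply (Rmult_lt_reg_l (/ M)). apply Rinv_0_lt_compat; auto.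
     replace (/ M * PI) with (PI / M) by (unfold Rdiv; ring). replace (/ M * (M * T)) with T by (field; lra). auto. }
   assert (0 < PI / T) by (apply Rdiv_lt_0_compat; lra). nra. }
 set (cc := sqrt (3 + 3 / 4 * A ^ 2)).
 assert (Hcc2 : cc * cc = 3 + 3 / 4 * A ^ 2) by (unfold cc; apply sqrt_sqrt; lra).
 assert (Hccp : 0 < cc) by (unfold cc; apply sqrt_lt_R0; lra).
 assert (Hrange : forall x, t1 < x <= z1 -> -1 < / A * y x < 1).
 { intros x Hx. assert (0 <= y x). { destruct (Req_dec x z1) as [->|]. lra. apply Rlt_le, Hpos; lra. }
   assert (y x < A).
   { destruct (Rlt_dec (y x) A) as [|Hn]; auto. exfalso. specialize (Hyb x).
     assert (y x = A) by nra. specialize (HE x). unfold En in HE. rewrite H3 in HE.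
     specialize (Dneg x Hx). assert (dy x ^ 2 = 0) by lra. nra. }
   split. assert (0 <= / A * y x) by (apply Rmult_le_pos; [apply Rlt_le, Rinv_0_lt_compat|]; lra). lra.
   apply (Rmult_lt_reg_l A); auto. field_simplify; lra. }
 assert (Hphi : forall x, t1 < x <= z1 -> / sqrt (1 - (/ A * y x)²) * (/ A * dy x) <= - cc).
 { intros x Hx. specialize (Hrange x Hx). set (u := / A * y x) in *.
   assert (Hu2 : 0 < 1 - u²) by (unfold Rsqr; nra).
   set (S := sqrt (1 - u²)).
   assert (HS : 0 < S) by (unfold S; apply sqrt_lt_R0; auto).
   assert (HS2 : S * S = 1 - u²) by (unfold S; apply sqrt_sqrt; lra).
   assert (Hyx : y x = A * u) by (unfold u; field; lra).
   specialize (Dneg x Hx). specialize (HE x). unfold En in HE. rewrite <- HGA in HE.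
   assert (Hdy2 : dy x ^ 2 >= cc * cc * (A * S) ^ 2).
   { rewrite Hcc2. replace ((A * S) ^ 2) with (A ^ 2 * (S * S)) by ring. rewrite HS2.
     unfold Rsqr. rewrite Hyx in HE.
     assert (0 <= A ^ 2 * (1 - u * u)) by (apply Rmult_le_pos; [lra|unfold Rsqr in Hu2; lra]).
     assert (0 <= u * u) by nra.
     nra. }
   assert (Hdy : dy x <= - (cc * (A * S))).
   { assert (0 < cc * (A * S)) by (apply Rmult_lt_0_compat; [exact Hccp|]; apply Rmult_lt_0_compat; auto).
     destruct (Rle_dec (dy x) (- (cc * (A * S)))) as [|Hn]; auto. exfalso. nra. }
   fold S. apply (Rmult_le_reg_l (A * S)). apply Rmult_lt_0_compat; auto.
   replace (A * S * (/ S * (/ A * dy x))) with (dy x) by (field; lra). nra. }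
 assert (Hup : forall t, t1 < t < z1 -> cc * (z1 - t) <= PI / 2).
 { intros t Ht.
   destruct (MVT_cor2 (fun t => asin (/ A * y t))
      (fun x => / sqrt (1 - (/ A * y x)²) * (/ A * dy x)) t z1 ltac:(lra)) as [xi [Hxi1 Hxi2]].
   { intros x Hx. apply (asin_deriv (fun t => / A * y t) (/ A * dy x) x). apply D_scal; auto. apply Hrange; lra. }
   rewrite Yz1, Rmult_0_r, asin_0 in Hxi1.
   specialize (Hphi xi ltac:(lra)).
   pose proof (asin_bound (/ A * y t)). nra. }
 assert (Up : T <= PI / cc).
 { destruct (Rle_dec T (PI / cc)) as [|Hn]; auto. exfalso.
   set (t := (t1 + (z1 - PI / (2 * cc))) / 2).
   assert (HPc : 0 < PI / (2 * cc)) by (apply Rdiv_lt_0_compat; lra).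
   assert (Hrel : PI / cc = 2 * (PI / (2 * cc))) by (field; lra).
   unfold T in Hn. specialize (Hup t ltac:(unfold t; lra)).
   assert (Hgt : cc * (z1 - t) > cc * (PI / (2 * cc))) by (apply Rmult_lt_compat_l; auto; unfold t; lra).
   replace (cc * (PI / (2 * cc))) with (PI / 2) in Hgt by (field; lra). lra. }
 assert (Up2 : 3 + 3 / 4 * A ^ 2 <= (PI / T) * (PI / T)).
 { rewrite <- Hcc2. assert (cc <= PI / T).
   { apply (Rmult_le_reg_r T); auto. replace (PI / T * T) with PI by (field; lra).
     apply (Rmult_le_reg_l (/ cc)). apply Rinv_0_lt_compat; auto.
     replace (/ cc * PI) with (PI / cc) by (unfold Rdiv; ring). replace (/ cc * (cc * T)) with T by (field; lra). auto. }
   nra. }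
 exists T, A, t1. repeat split; auto.
Qed.
End Core.

Lemma En_opp u v : En (- u) (- v) = En u v.
Proof. unfold En. field. Qed.

Lemma strict_pt y dy E0 A : duff y dy -> (forall t, En (y t) (dy t) = E0) -> 0 < A ->
  3 / 2 * A ^ 2 + 3 / 8 * A ^ 4 = E0 -> (forall t, y t ^ 2 <= A ^ 2) ->
  forall a b, a < b -> exists s, a < s < b /\ y s ^ 2 < A ^ 2.
Proof.
 intros [H1 H2] HE HA HG Hyb a b Hab.
 destruct (classic (exists s, a < s < b /\ y s ^ 2 < A ^ 2)) as [|Hn]; auto. exfalso.
 assert (Heq : forall s, a < s < b -> y s ^ 2 = A ^ 2).
 { intros s Hs. specialize (Hyb s). destruct (Rlt_dec (y s ^ 2) (A ^ 2)); [|lra].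
   exfalso; apply Hn; exists s; auto. }
 assert (Hdz : forall s, a < s < b -> dy s = 0).
 { intros s Hs. specialize (Heq s Hs). specialize (HE s). unfold En in HE.
   assert (y s ^ 4 = (y s ^ 2) ^ 2) by ring. assert (A ^ 4 = (A ^ 2) ^ 2) by ring.
   assert (dy s ^ 2 = 0) by nra. nra. }
 set (m := (a + b) / 2).
 assert (Hm : a < m < b) by (unfold m; lra).
 assert (Hym : y m <> 0). { intro E. specialize (Heq m Hm). rewrite E in Heq. nra. }
 set (d := - (3 * y m + 3 / 2 * y m ^ 3)).
 assert (Hd : d <> 0).
 { unfold d. replace (- (3 * y m + 3 / 2 * y m ^ 3)) with (- y m * (3 + 3 / 2 * y m ^ 2)) by ring.
   apply Rmult_integral_contrapositive. split. lra. pose proof (pow2_ge_0 (y m)). lra. }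
 set (h0 := (b - m) / 2).
 destruct (Rtotal_order d 0) as [Hlt|[|Hgt]]; [|contradiction|].
 - destruct (loc_neg dy m d (H2 m) Hlt) as [del [Hdel Hh]].
   set (h := Rmin (del / 2) h0).
   assert (0 < h) by (unfold h, h0; apply Rmin_pos; lra).
   assert (h < del) by (unfold h; eapply Rle_lt_trans; [apply Rmin_l|lra]).
   assert (h <= h0) by (unfold h; apply Rmin_r).
   destruct (Hh h ltac:(lra)) as [Q1 _]. rewrite (Hdz m Hm), (Hdz (m + h)) in Q1 by (unfold h0 in *; lra). lra.
 - destruct (loc_pos dy m d (H2 m) Hgt) as [del [Hdel Hh]].
   set (h := Rmin (del / 2) h0).
   assert (0 < h) by (unfold h, h0; apply Rmin_pos; lra).
   assert (h < del) by (unfold h; eapply Rle_lt_trans; [apply Rmin_l|lra]).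
   assert (h <= h0) by (unfold h; apply Rmin_r).
   destruct (Hh h ltac:(lra)) as [Q1 _]. rewrite (Hdz m Hm), (Hdz (m + h)) in Q1 by (unfold h0 in *; lra). lra.
Qed.

Theorem theorem4p1 (alpha beta : R) (y dy : R -> R) :
  (alpha, beta) <> (0, 0) ->
  (forall t, is_derive y t (dy t)) ->
  (forall t, is_derive dy t (- (3 * y t + 3 / 2 * y t ^ 3))) ->
  y 0 = alpha -> dy 0 = beta ->
  ((forall t, Rabs (y t) <= sqrt (10 / 21)) \/ energy1 alpha beta <= 235 / 294) ->
  hill_trivial_stable (fun t => 7 + 27 / 2 * y t ^ 2).
Proof.
 intros Hab H1 H2 Y0 D0 Hcase.
 assert (Hd : duff y dy) by (split; auto).
 set (E0 := energy1 alpha beta).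
 assert (HE : forall t, En (y t) (dy t) = E0).
 { intros t. rewrite (duff_energy y dy Hd t), Y0, D0. unfold En, E0, energy1. ring. }
 assert (HE0 : 0 < E0).
 { unfold E0, energy1. destruct (Req_dec alpha 0) as [Ha|Ha].
   - assert (Hb : beta <> 0) by (intro Hb0; apply Hab; rewrite Ha, Hb0; reflexivity). pose proof (pow2_gt_0 beta Hb).
     rewrite Ha. replace (0 ^ 2) with 0 by ring. replace (0 ^ 4) with 0 by ring. lra.
   - pose proof (pow2_gt_0 alpha Ha). pose proof (pow2_ge_0 beta).
     assert (0 <= alpha ^ 4) by (replace (alpha ^ 4) with ((alpha ^ 2) ^ 2) by ring; apply pow2_ge_0). lra. }
 assert (Hs3 : 0 < sqrt 3) by (apply sqrt_lt_R0; lra).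
 destruct (zero_exists (fun t => 3 + 3 / 2 * y t ^ 2) y dy (sqrt 3) 0 Hs3 (duff_hill y dy Hd))
   as [z0 [_ Yz0]].
 { intros t. rewrite sqrt_sqrt by lra. pose proof (pow2_ge_0 (y t)). lra. }
 assert (Dz0 : dy z0 <> 0).
 { intro E. specialize (HE z0). unfold En in HE. rewrite E, Yz0 in HE. lra. }
 assert (Hcore : exists T A t1, 0 < A /\ 3 / 2 * A ^ 2 + 3 / 8 * A ^ 4 = E0 /\ y t1 ^ 2 = A ^ 2 /\
  (forall t, y t ^ 2 <= A ^ 2) /\ (forall t, y (t + T) = - y t) /\ 0 < T /\
  (PI / T) * (PI / T) < 4 + 3 / 2 * A ^ 2 /\ 3 + 3 / 4 * A ^ 2 <= (PI / T) * (PI / T)).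
 { destruct (Rtotal_order (dy z0) 0) as [Hlt|[|Hgt]]; [|contradiction|].
   - destruct (core (fun t => - y t) (fun t => - dy t) (duff_opp y dy Hd) E0
       ltac:(intros t; rewrite <- (HE t); cbv beta; apply En_opp) HE0 z0 ltac:(cbv beta; rewrite Yz0; ring) ltac:(cbv beta; lra))
       as [T [A [t1 [P1 [P2 [P3 [P4 [P5 [P6 [P7 P8]]]]]]]]]].
     exists T, A, t1. repeat split; auto.
     rewrite <- P3. ring.
     intros t; specialize (P4 t); replace ((- y t) ^ 2) with (y t ^ 2) in P4 by ring; auto.
     intros t; specialize (P5 t); lra.
   - destruct (core y dy Hd E0 HE HE0 z0 Yz0 Hgt)
       as [T [A [t1 [P1 [P2 [P3 [P4 [P5 [P6 [P7 P8]]]]]]]]]].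
     exists T, A, t1. repeat split; auto. rewrite P3; auto. }
 destruct Hcore as [T [A [t1 [HA [HGA [Ht1 [Hyb [Hper [HT [Low Up]]]]]]]]]].
 assert (HA2 : A ^ 2 <= 10 / 21).
 { destruct Hcase as [Hc|Hc].
   - specialize (Hc t1). assert (Hs := sqrt_sqrt (10 / 21) ltac:(lra)).
     assert (0 <= sqrt (10/21)) by (apply sqrt_pos).
     rewrite <- Ht1. unfold Rabs in Hc; destruct (Rcase_abs (y t1)); nra.
   - fold E0 in Hc. destruct (Rle_dec (A ^ 2) (10 / 21)) as [|Hn]; auto. exfalso.
     assert (A ^ 4 = (A ^ 2) ^ 2) by ring. nra. }
 assert (Hpos2 : 0 <= A ^ 2) by apply pow2_ge_0.
 assert (H4 : (2 * PI / T) * (2 * PI / T) = 4 * ((PI / T) * (PI / T))) by (field; lra).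
 pose proof (hill_stable (fun t => 7 + 27 / 2 * y t ^ 2) T HT) as Hst.
 assert (Hq : forall t, (fun t => 7 + 27 / 2 * y t ^ 2) (t + T) = (fun t => 7 + 27 / 2 * y t ^ 2) t).
 { intros t; cbv beta. rewrite Hper. ring. }
 specialize (Hst Hq).
 assert (Hlo : forall t, PI / T * (PI / T) < (fun t => 7 + 27 / 2 * y t ^ 2) t).
 { intros t; cbv beta. pose proof (pow2_ge_0 (y t)). lra. }
 assert (Hhi : forall t, (fun t => 7 + 27 / 2 * y t ^ 2) t <= 2 * PI / T * (2 * PI / T)).
 { intros t; cbv beta. rewrite H4. specialize (Hyb t). lra. }
 assert (Hstr : forall a b, a < b -> exists s, a < s < b /\
    (fun t => 7 + 27 / 2 * y t ^ 2) s < 2 * PI / T * (2 * PI / T)).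
 { intros a b Hab'. destruct (strict_pt y dy E0 A Hd HE HA HGA Hyb a b Hab') as [s [Hs Hs2]].
   exists s. split; auto. cbv beta. rewrite H4. lra. }
 specialize (Hst Hlo Hhi Hstr).
 exact Hst.
Qed.
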